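(* Let $(\lambda_j)_{j\ge1}$ be nonnegative with $\sum_j\lambda_j<\infty$ and $\lambda_j\le c\,j^{-\beta}$ for some $\beta>1$. Let $\gamma>0$ with $\beta\neq\gamma+1$, $0<\eta_0\le\bar\eta$ for a fixed constant $\bar\eta$, $\eta_i=\eta_0(1-i/N)^\gamma$ ($i=0,\dots,N-1$), $t_k=\sum_{i<k}\eta_i$, $T=t_N$, and assume $T\ge1$. Then $$\mathcal N_N:=\sum_{i=0}^{N-1}\eta_i^2\sum_{j\ge1}\lambda_j^2e^{-2\lambda_j(t_N-t_{i+1})}\lesssim\eta_0\,T^{-\min\{1-\frac1\beta,\,\frac{\gamma}{\gamma+1}\}},$$ with implicit constant independent of $N$ and $\eta_0$. *)

(* Defs.v *)
From Stdlib Require Import Reals.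
From Coquelicot Require Import Coquelicot.
Open Scope R_scope.

Fixpoint sumR (f : nat -> R) (n : nat) : R :=
  match n with
  | O => 0
  | S m => sumR f m + f m
  end.

Definition step (eta0 gamma : R) (N i : nat) : R :=
  eta0 * Rpower (1 - INR i / INR N) gamma.

Definition tk (eta0 gamma : R) (N k : nat) : R :=
  sumR (step eta0 gamma N) k.

(* N_N = sum_{i=0}^{N-1} eta_i^2 sum_{j>=1} lam_j^2 exp(-2 lam_j (t_N - t_{i+1})) ;
   the sequence lam is indexed from j = 1 (lam 0 is unused). *)
Definition noiseN (lam : nat -> R) (eta0 gamma : R) (N : nat) : R :=
  sumR (fun i => (step eta0 gamma N i)^2 *
     Series (fun n => (lam (S n))^2 *
        exp (-2 * lam (S n) * (tk eta0 gamma N N - tk eta0 gamma N (S i))))) N.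

(* Main.v *)
Require Import Defs.
From Stdlib Require Import Reals Lra Lia.
From Coquelicot Require Import Coquelicot.
Open Scope R_scope.

Lemma exp_le_mono x y : x <= y -> exp x <= exp y.
Proof. intros H; destruct (Rle_lt_or_eq_dec _ _ H) as [H'|H'].
  left; apply exp_increasing; auto. rewrite H'; lra. Qed.

Lemma ln_le_mono x y : 0 < x -> x <= y -> ln x <= ln y.
Proof. intros Hx H; destruct (Rle_lt_or_eq_dec _ _ H) as [H'|H'].
  left; apply ln_increasing; auto. rewrite H'; lra. Qed.

Lemma le_of_ln x y : 0 < x -> 0 < y -> ln x <= ln y -> x <= y.
Proof. intros Hx Hy H; destruct (Rle_lt_or_eq_dec _ _ H) as [H'|H'].
  left; apply ln_lt_inv; auto. right; apply ln_inv; auto. Qed.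

Lemma Rpower_pos x y : 0 < Rpower x y.
Proof. unfold Rpower; apply exp_pos. Qed.

Lemma Rpower_le_base_neg a b c : 0 < a -> a <= b -> c <= 0 -> Rpower b c <= Rpower a c.
Proof. intros Ha Hab Hc; unfold Rpower; apply exp_le_mono.
  pose proof (ln_le_mono a b Ha Hab). nra. Qed.

Lemma Rpower_le_base_pos a b c : 0 < a -> a <= b -> 0 <= c -> Rpower a c <= Rpower b c.
Proof. intros Ha Hab Hc; unfold Rpower; apply exp_le_mono.
  pose proof (ln_le_mono a b Ha Hab). nra. Qed.

Lemma Rpower_le_exp_ge1 x a b : 1 <= x -> a <= b -> Rpower x a <= Rpower x b.
Proof. intros; apply Rle_Rpower; auto. Qed.

Lemma Rpower_le_exp_le1 x a b : 0 < x -> x <= 1 -> a <= b -> Rpower x b <= Rpower x a.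
Proof. intros Hx H1 Hab; unfold Rpower; apply exp_le_mono.
  assert (ln x <= 0) by (rewrite <- ln_1; apply ln_le_mono; lra). nra. Qed.

Lemma pow_mvt r u : 0 < u -> exists xi, u < xi < u + 1 /\
  Rpower (u+1) r - Rpower u r = r * Rpower xi (r - 1).
Proof. intros Hu.
  destruct (MVT_cor2 (fun x => Rpower x r) (fun x => r * Rpower x (r-1)) u (u+1))
    as [xi [H1 H2]]. lra.
  intros c' Hc. apply derivable_pt_lim_power. lra.
  exists xi. split. lra. rewrite H1. ring. Qed.

Lemma sumR_le f g n : (forall i, (i < n)%nat -> f i <= g i) -> sumR f n <= sumR g n.
Proof. induction n; simpl; intros H. lra.
  assert (sumR f n <= sumR g n) by (apply IHn; intros; apply H; lia).
  specialize (H n ltac:(lia)). lra. Qed.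

Lemma sumR_nonneg f n : (forall i, (i < n)%nat -> 0 <= f i) -> 0 <= sumR f n.
Proof. induction n; simpl; intros H. lra.
  assert (0 <= sumR f n) by (apply IHn; intros; apply H; lia).
  specialize (H n ltac:(lia)). lra. Qed.

Lemma sumR_split f m n : sumR f (m + n) = sumR f m + sumR (fun j => f (m + j)%nat) n.
Proof. induction n; simpl. rewrite Nat.add_0_r; ring.
  rewrite Nat.add_succ_r; simpl; rewrite IHn; ring. Qed.

Lemma sumR_shift f n : sumR f (S n) = f 0%nat + sumR (fun i => f (S i)) n.
Proof. induction n. simpl; ring. simpl in *. rewrite IHn. ring. Qed.

Lemma sumR_ext f g n : (forall i, (i < n)%nat -> f i = g i) -> sumR f n = sumR g n.
Proof. induction n; simpl; intros H. auto.
  rewrite IHn, H; auto; intros; apply H; lia. Qed.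

Lemma sumR_rev f n : sumR f n = sumR (fun i => f (n - 1 - i)%nat) n.
Proof. induction n. reflexivity.
  rewrite (sumR_shift (fun i => f (S n - 1 - i)%nat)).
  change (sumR f (S n)) with (sumR f n + f n). rewrite IHn.
  replace (S n - 1 - 0)%nat with n by lia. rewrite Rplus_comm. f_equal.
  apply sumR_ext. intros; f_equal; lia. Qed.

Lemma sumR_scal c f n : sumR (fun i => c * f i) n = c * sumR f n.
Proof. induction n; simpl. ring. rewrite IHn; ring. Qed.

Lemma sumR_const c n : sumR (fun _ => c) n = INR n * c.
Proof. induction n; simpl sumR. simpl; ring. rewrite IHn, S_INR; ring. Qed.

Lemma sumR_mono_n f m n : (m <= n)%nat -> (forall i, 0 <= f i) -> sumR f m <= sumR f n.
Proof. intros Hmn Hf. replace n with (m + (n - m))%nat by lia.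
  rewrite sumR_split. assert (0 <= sumR (fun j => f (m+j)%nat) (n-m)) by
  (apply sumR_nonneg; intros; apply Hf). lra. Qed.

Lemma sumR_sum_n f n : sumR f (S n) = sum_n f n.
Proof. induction n. simpl. rewrite sum_O. ring.
  rewrite sum_Sn, <- IHn. simpl. reflexivity. Qed.

Lemma series_ub a B : ex_series a -> (forall n, sumR a n <= B) -> Series a <= B.
Proof. intros He Hb. pose proof (Series_correct a He) as Hs.
  assert (Hl : is_lim_seq (sum_n a) (Series a)) by exact Hs.
  pose proof (is_lim_seq_le (sum_n a) (fun _ => B) (Series a) B) as H.
  simpl in H. apply H; auto. intros n; rewrite <- sumR_sum_n; auto.
  apply is_lim_seq_const. Qed.


Lemma Rpower1_l y : Rpower 1 y = 1.
Proof. unfold Rpower; rewrite ln_1, Rmult_0_r; apply exp_0. Qed.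

Lemma INR_pos n : (1 <= n)%nat -> 0 < INR n.
Proof. intros; apply lt_0_INR; lia. Qed.

Lemma sum_pow_lower g : 0 <= g -> forall K, (1 <= K)%nat ->
  Rpower (INR K) (g+1) <= (g+1) * sumR (fun l => Rpower (INR (S l)) g) K.
Proof. intros Hg K HK. induction K as [|K IH]. lia.
  destruct K as [|K'].
  - simpl. rewrite !Rpower1_l. lra.
  - set (K := S K') in *. specialize (IH ltac:(unfold K; lia)).
    change (sumR (fun l => Rpower (INR (S l)) g) (S K)) with
      (sumR (fun l => Rpower (INR (S l)) g) K + Rpower (INR (S K)) g).
    assert (Hu : 0 < INR K) by (apply INR_pos; unfold K; lia).
    destruct (pow_mvt (g+1) (INR K) Hu) as [xi [Hxi Heq]].
    rewrite S_INR. replace (g + 1 - 1) with g in Heq by ring.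
    assert (Rpower xi g <= Rpower (INR K + 1) g) by (apply Rpower_le_base_pos; lra).
    nra. Qed.

Lemma tail_tel q u : 1 < q -> 0 < u -> forall n,
  (q-1) * sumR (fun k => Rpower (u + 1 + INR k) (-q)) n <= Rpower u (1-q) - Rpower (u + INR n) (1-q).
Proof. intros Hq Hu n. induction n.
  - simpl. rewrite Rplus_0_r. lra.
  - simpl sumR. rewrite S_INR.
    assert (Hv : 0 < u + INR n) by (pose proof (pos_INR n); lra).
    destruct (pow_mvt (1-q) (u + INR n) Hv) as [xi [Hxi Heq]].
    replace (1 - q - 1) with (-q) in Heq by ring.
    assert (Rpower (u + INR n + 1) (-q) <= Rpower xi (-q)) by (apply Rpower_le_base_neg; lra).
    replace (u + 1 + INR n) with (u + INR n + 1) by ring.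
    replace (u + (INR n + 1)) with (u + INR n + 1) by ring.
    nra. Qed.

Lemma tail_bound q u : 1 < q -> 1 <= u -> forall n,
  sumR (fun k => Rpower (u + INR k) (-q)) n <= q / (q-1) * Rpower u (1-q).
Proof. intros Hq Hu n. destruct n as [|n].
  - simpl. pose proof (Rpower_pos u (1-q)).
    assert (0 < q/(q-1)) by (apply Rdiv_lt_0_compat; lra). nra.
  - rewrite sumR_shift. simpl INR at 1. rewrite Rplus_0_r.
    pose proof (tail_tel q u Hq ltac:(lra) n) as Ht.
    rewrite (sumR_ext _ (fun k => Rpower (u + 1 + INR k) (-q))).
    2:{ intros i _. rewrite S_INR. f_equal. ring. }
    pose proof (Rpower_pos (u + INR n) (1-q)).
    assert (Rpower u (-q) <= Rpower u (1-q)) by (apply Rle_Rpower; lra).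
    assert (H1: sumR (fun k => Rpower (u + 1 + INR k) (- q)) n <= Rpower u (1-q) / (q-1)).
    { apply (Rmult_le_reg_l (q-1)). lra. field_simplify; lra. }
    replace (q / (q-1) * Rpower u (1-q)) with (Rpower u (1-q) + Rpower u (1-q)/(q-1)) by (field; lra).
    lra. Qed.

Lemma sum_pow_concave r : 0 < r < 1 -> forall n, (1 <= n)%nat ->
  r * sumR (fun k => Rpower (INR (S k)) (r-1)) n <= Rpower (INR n) r.
Proof. intros Hr n Hn. induction n as [|K IH]. lia.
  destruct K as [|K'].
  - simpl. rewrite !Rpower1_l. lra.
  - set (K := S K') in *. specialize (IH ltac:(unfold K; lia)).
    change (sumR (fun l => Rpower (INR (S l)) (r-1)) (S K)) with
      (sumR (fun l => Rpower (INR (S l)) (r-1)) K + Rpower (INR (S K)) (r-1)).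
    assert (Hu : 0 < INR K) by (apply INR_pos; unfold K; lia).
    destruct (pow_mvt r (INR K) Hu) as [xi [Hxi Heq]].
    rewrite S_INR.
    assert (Rpower (INR K + 1) (r-1) <= Rpower xi (r-1)) by (apply Rpower_le_base_neg; lra).
    nra. Qed.

Lemma sum_pow_upper p : -1 < p -> exists Cp, 0 < Cp /\ forall n, (1 <= n)%nat ->
  sumR (fun k => Rpower (INR (S k)) p) n <= Cp * Rpower (INR n) (p+1).
Proof. intros Hp. destruct (Rle_lt_dec 0 p) as [H0|H0].
  - exists 1. split. lra. intros n Hn.
    assert (Hn' : 0 < INR n) by (apply INR_pos; auto).
    apply Rle_trans with (sumR (fun _ => Rpower (INR n) p) n).
    + apply sumR_le. intros i Hi. apply Rpower_le_base_pos; auto.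
      apply lt_0_INR; lia. apply le_INR; lia.
    + rewrite sumR_const, Rpower_plus, Rpower_1; auto. lra.
  - exists (/(p+1)). split. apply Rinv_0_lt_compat; lra. intros n Hn.
    pose proof (sum_pow_concave (p+1) ltac:(lra) n Hn) as H.
    replace (p + 1 - 1) with p in H by ring.
    apply (Rmult_le_reg_l (p+1)). lra. field_simplify; try lra.
    Qed.


Definition gterm (lam : nat -> R) (s : R) (n : nat) : R :=
  (lam (S n))^2 * exp (-2 * lam (S n) * s).

Lemma gterm_nonneg lam s n : 0 <= gterm lam s n.
Proof. unfold gterm. pose proof (exp_pos (-2 * lam (S n) * s)). nra. Qed.

Lemma exp_mul_opp x : exp x * exp (-x) = 1.
Proof. rewrite <- exp_plus. replace (x + - x) with 0 by ring. apply exp_0. Qed.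

Lemma term_le0 l s c : 0 <= l -> l <= c -> 0 <= s -> l^2 * exp (-2*l*s) <= c * l.
Proof. intros Hl Hc Hs. assert (exp (-2*l*s) <= 1).
  { rewrite <- exp_0. apply exp_le_mono. nra. }
  pose proof (exp_pos (-2*l*s)). nra. Qed.

Lemma term_le1 l s : 0 <= l -> 0 < s -> l^2 * exp (-2*l*s) <= / s^2.
Proof. intros Hl Hs. pose proof (exp_mul_opp (2*l*s)) as E.
  replace (- (2*l*s)) with (-2*l*s) in E by ring.
  assert (H1 : 1 + l*s <= exp (l*s)) by apply exp_ineq1_le.
  assert (H2 : exp (2*l*s) = exp (l*s) * exp (l*s)) by (rewrite <- exp_plus; f_equal; ring).
  pose proof (exp_pos (-2*l*s)). pose proof (exp_pos (l*s)).
  apply (Rmult_le_reg_l (s^2)). nra. rewrite Rinv_r by nra.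
  assert (l*s <= exp (l*s)) by lra.
  assert ((l*s)*(l*s) <= exp (l*s) * exp (l*s)) by (apply Rmult_le_compat; nra).
  nra. Qed.

Lemma term_le2 l s : 0 <= l -> 0 < s -> l^2 * exp (-2*l*s) <= l / (2*s).
Proof. intros Hl Hs. pose proof (exp_mul_opp (2*l*s)) as E.
  replace (- (2*l*s)) with (-2*l*s) in E by ring.
  assert (H1 : 1 + 2*l*s <= exp (2*l*s)) by apply exp_ineq1_le.
  pose proof (exp_pos (-2*l*s)).
  apply (Rmult_le_reg_l (2*s)). lra.
  assert (2*s*(l/(2*s)) = l) by (field; lra).
  assert (l * (2*l*s) * exp (-2*l*s) <= l * exp (2*l*s) * exp (-2*l*s)).
  { apply Rmult_le_compat_r. lra. apply Rmult_le_compat_l; lra. }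
  rewrite (Rmult_assoc l (exp (2*l*s))), E in H2. nra. Qed.

Lemma c_nonneg lam c beta :
  (forall j : nat, (1 <= j)%nat -> 0 <= lam j) ->
  (forall j : nat, (1 <= j)%nat -> lam j <= c * Rpower (INR j) (- beta)) -> 0 <= c.
Proof. intros Hnn Hdec. specialize (Hnn 1%nat ltac:(lia)). specialize (Hdec 1%nat ltac:(lia)).
  simpl INR in Hdec. rewrite Rpower1_l in Hdec. lra. Qed.

Lemma lam_le_c lam c beta : 1 < beta ->
  (forall j : nat, (1 <= j)%nat -> 0 <= lam j) ->
  (forall j : nat, (1 <= j)%nat -> lam j <= c * Rpower (INR j) (- beta)) ->
  forall j, (1 <= j)%nat -> lam j <= c.
Proof. intros Hb Hnn Hdec j Hj. pose proof (c_nonneg _ _ _ Hnn Hdec).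
  specialize (Hdec j Hj). assert (Rpower (INR j) (-beta) <= 1).
  { rewrite <- (Rpower1_l (-beta)). apply Rpower_le_base_neg; try lra.
    replace 1 with (INR 1) by reflexivity. apply le_INR; auto. }
  nra. Qed.

Lemma gterm_ex lam c beta s : 1 < beta -> 0 <= s ->
  (forall j : nat, (1 <= j)%nat -> 0 <= lam j) ->
  ex_series (fun n => lam (S n)) ->
  (forall j : nat, (1 <= j)%nat -> lam j <= c * Rpower (INR j) (- beta)) ->
  ex_series (gterm lam s).
Proof. intros Hb Hs Hnn Hsum Hdec.
  apply (@ex_series_le R_AbsRing R_CompleteNormedModule _ (fun n => c * lam (S n))).
  - intros n. unfold norm; simpl. unfold abs; simpl. rewrite Rabs_pos_eq by apply gterm_nonneg.
    apply term_le0; auto. apply Hnn; lia. apply (lam_le_c lam c beta); auto; lia.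
  - apply (ex_series_scal c) in Hsum. exact Hsum. Qed.

Lemma gbound0 lam c beta : 1 < beta ->
  (forall j : nat, (1 <= j)%nat -> 0 <= lam j) ->
  ex_series (fun n => lam (S n)) ->
  (forall j : nat, (1 <= j)%nat -> lam j <= c * Rpower (INR j) (- beta)) ->
  exists K0, 0 < K0 /\ forall s, 0 <= s -> Series (gterm lam s) <= K0.
Proof. intros Hb Hnn Hsum Hdec.
  exists (c * Series (fun n => lam (S n)) + 1). split.
  - pose proof (c_nonneg _ _ _ Hnn Hdec).
    assert (0 <= Series (fun n => lam (S n))).
    { apply Rle_trans with (Series (fun n => 0 * lam (S n))).
      rewrite Series_scal_l; lra.
      apply Series_le; auto. intros n; split. lra. rewrite Rmult_0_l; apply Hnn; lia. }
    nra.
  - intros s Hs. apply Rle_trans with (Series (fun n => c * lam (S n))).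
    + apply Series_le. intros n; split. apply gterm_nonneg.
      apply term_le0; auto. apply Hnn; lia. apply (lam_le_c lam c beta); auto; lia.
      apply (ex_series_scal c) in Hsum. exact Hsum.
    + rewrite Series_scal_l. lra. Qed.

Lemma Rpower_m1 s : 0 < s -> Rpower s (-1) = / s.
Proof. intros; replace (-1) with (-(1)) by ring; rewrite Rpower_Ropp, Rpower_1; auto. Qed.

Lemma Rpower_m2 s : 0 < s -> Rpower s (-2) = / s^2.
Proof. intros; replace (-2) with (-(2)) by ring; rewrite Rpower_Ropp. replace 2 with (INR 2) by (simpl; ring).
  rewrite Rpower_pow; auto. Qed.

Lemma gbound1 lam c beta : 1 < beta ->
  (forall j : nat, (1 <= j)%nat -> 0 <= lam j) ->
  ex_series (fun n => lam (S n)) ->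
  (forall j : nat, (1 <= j)%nat -> lam j <= c * Rpower (INR j) (- beta)) ->
  exists K1, 0 < K1 /\ forall s, 1 <= s ->
    Series (gterm lam s) <= K1 * Rpower s (-(2 - 1/beta)).
Proof. intros Hb Hnn Hsum Hdec.
  pose proof (c_nonneg _ _ _ Hnn Hdec) as Hc.
  set (K1 := 1 + c / (2 * (beta - 1)) * Rpower (/2) (1 - beta)).
  assert (HK : 0 <= c / (2 * (beta - 1)) * Rpower (/2) (1 - beta)).
  { pose proof (Rpower_pos (/2) (1-beta)).
    assert (0 <= c / (2*(beta-1))) by (apply Rmult_le_pos; auto; left; apply Rinv_0_lt_compat; lra).
    nra. }
  exists K1. split. unfold K1; lra.
  intros s Hs.
  set (y := Rpower s (1/beta)).
  assert (Hy : 1 <= y).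
  { unfold y. apply Rle_trans with (Rpower s 0). rewrite Rpower_O; lra. apply Rle_Rpower; auto.
    left; apply Rdiv_lt_0_compat; lra. }
  destruct (nfloor_ex y ltac:(lra)) as [J [HJ1 HJ2]].
  assert (HJ : (1 <= J)%nat).
  { destruct J. simpl in HJ2. lra. lia. }
  assert (HJr : 1 <= INR J) by (replace 1 with (INR 1) by reflexivity; apply le_INR; auto).
  apply series_ub. apply (gterm_ex lam c beta); auto; lra.
  intros M.
  apply Rle_trans with (sumR (gterm lam s) (J + M)).
  { apply sumR_mono_n. lia. intros; apply gterm_nonneg. }
  rewrite sumR_split.
  assert (B1 : sumR (gterm lam s) J <= INR J * / s^2).
  { rewrite <- sumR_const. apply sumR_le. intros i _. unfold gterm.
    apply term_le1. apply Hnn; lia. lra. }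
  assert (B2 : sumR (fun j => gterm lam s (J + j)%nat) M <=
               c / (2*s) * (Rpower (INR J) (1 - beta) / (beta - 1))).
  { apply Rle_trans with (sumR (fun k => c / (2*s) * Rpower (INR J + 1 + INR k) (-beta)) M).
    - apply sumR_le. intros k _. unfold gterm.
      eapply Rle_trans. apply term_le2. apply Hnn; lia. lra.
      specialize (Hdec (S (J + k)) ltac:(lia)).
      replace (INR (S (J+k))) with (INR J + 1 + INR k) in Hdec
        by (rewrite S_INR, plus_INR; ring).
      unfold Rdiv. replace (c * / (2 * s) * Rpower (INR J + 1 + INR k) (- beta)) with
        (c * Rpower (INR J + 1 + INR k) (- beta) * / (2 * s)) by ring.
      apply Rmult_le_compat_r. left; apply Rinv_0_lt_compat; lra. auto.
    - rewrite sumR_scal. apply Rmult_le_compat_l.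
      apply Rmult_le_pos; auto. left; apply Rinv_0_lt_compat; lra.
      pose proof (tail_tel beta (INR J) Hb ltac:(lra) M).
      pose proof (Rpower_pos (INR J + INR M) (1 - beta)).
      apply (Rmult_le_reg_l (beta - 1)). lra.
      replace ((beta - 1) * (Rpower (INR J) (1 - beta) / (beta - 1))) with
        (Rpower (INR J) (1 - beta)) by (field; lra). lra. }
  assert (E1 : y * / s^2 = Rpower s (-(2 - 1/beta))).
  { unfold y. rewrite <- Rpower_m2 by lra. rewrite <- Rpower_plus. f_equal; ring. }
  assert (E2 : Rpower (INR J) (1 - beta) <= Rpower y (1 - beta) * Rpower (/2) (1 - beta)).
  { rewrite Rpower_mult_distr by lra. apply Rpower_le_base_neg; lra. }
  assert (E3 : Rpower y (1 - beta) * / s = Rpower s (-(2 - 1/beta))).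
  { unfold y. rewrite Rpower_mult, <- Rpower_m1 by lra. rewrite <- Rpower_plus.
    f_equal. field. lra. }
  assert (HB1 : INR J * / s^2 <= Rpower s (-(2 - 1/beta))).
  { rewrite <- E1. apply Rmult_le_compat_r. left; apply Rinv_0_lt_compat; nra. lra. }
  assert (HB2 : c / (2*s) * (Rpower (INR J) (1 - beta) / (beta - 1)) <=
     c / (2 * (beta - 1)) * Rpower (/2) (1 - beta) * Rpower s (-(2 - 1/beta))).
  { rewrite <- E3.
    replace (c / (2*s) * (Rpower (INR J) (1 - beta) / (beta - 1))) with
      (c / (2 * (beta - 1)) * / s * Rpower (INR J) (1 - beta)) by (field; lra).
    replace (c / (2 * (beta - 1)) * Rpower (/ 2) (1 - beta) * (Rpower y (1 - beta) * / s)) with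
      (c / (2 * (beta - 1)) * / s * (Rpower y (1 - beta) * Rpower (/ 2) (1 - beta))) by ring.
    apply Rmult_le_compat_l; auto.
    apply Rmult_le_pos. apply Rmult_le_pos; auto. left; apply Rinv_0_lt_compat; lra.
    left; apply Rinv_0_lt_compat; lra. }
  unfold K1. lra. Qed.


Ltac pos := repeat match goal with
 | |- 0 < _ * _ => apply Rmult_lt_0_compat
 | |- 0 < / _ => apply Rinv_0_lt_compat
 | |- 0 < _ / _ => apply Rdiv_lt_0_compat
 | |- 0 < Rpower _ _ => apply Rpower_pos
 | |- 0 < exp _ => apply exp_pos
 | |- 0 < _ ^ _ => apply pow_lt
 end; try assumption; try lra.

Ltac lnsimp := unfold Rdiv; repeat first [ rewrite ln_mult by pos | rewrite ln_Rinv by pos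
   | rewrite ln_Rpower | rewrite ln_exp | rewrite ln_1 ].

Lemma step_eq eta0 gamma N i : (i < N)%nat ->
  step eta0 gamma N i = eta0 * Rpower (INR (N - i) / INR N) gamma.
Proof. intros H. unfold step. f_equal. f_equal. rewrite minus_INR by lia.
  assert (0 < INR N) by (apply lt_0_INR; lia). field. lra. Qed.

Lemma step_le eta0 gamma N i : 0 < eta0 -> 0 <= gamma -> (i < N)%nat ->
  0 < step eta0 gamma N i <= eta0.
Proof. intros He Hg H. rewrite step_eq by auto. split. pos.
  assert (0 < INR N) by (apply lt_0_INR; lia).
  assert (0 < INR (N - i)) by (apply lt_0_INR; lia).
  assert (INR (N - i) <= INR N) by (apply le_INR; lia).
  assert (Rpower (INR (N - i) / INR N) gamma <= 1).
  { rewrite <- (Rpower1_l gamma). apply Rpower_le_base_pos; auto. pos.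
    apply (Rmult_le_reg_r (INR N)); auto. unfold Rdiv; rewrite Rmult_assoc, Rinv_l; lra. }
  pose proof (Rpower_pos (INR (N - i) / INR N) gamma). nra. Qed.

Lemma T_le eta0 gamma N : 0 < eta0 -> 0 <= gamma -> tk eta0 gamma N N <= eta0 * INR N.
Proof. intros He Hg. unfold tk. rewrite Rmult_comm, <- sumR_const. apply sumR_le.
  intros i Hi. apply step_le; auto. Qed.

Lemma tail_eq eta0 gamma N i : (i < N)%nat ->
  tk eta0 gamma N N - tk eta0 gamma N (S i) =
  sumR (fun l => step eta0 gamma N (S i + l)) (N - S i).
Proof. intros H. unfold tk. replace N with (S i + (N - S i))%nat at 2 by lia.
  rewrite sumR_split. ring. Qed.

Lemma tail_nonneg eta0 gamma N i : 0 < eta0 -> 0 <= gamma -> (i < N)%nat ->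
  0 <= tk eta0 gamma N N - tk eta0 gamma N (S i).
Proof. intros He Hg H. rewrite tail_eq by auto. apply sumR_nonneg.
  intros l Hl. left; apply step_le; auto; lia. Qed.

Lemma Rpower_div a b y : 0 < a -> 0 < b -> Rpower (a / b) y = Rpower a y * / Rpower b y.
Proof. intros Ha Hb. apply ln_inv; pos. lnsimp. ring. Qed.

Lemma tail_lower eta0 gamma N i : 0 < eta0 -> 0 <= gamma -> (S i < N)%nat ->
  eta0 * Rpower (INR (N - S i)) (gamma + 1) / ((gamma + 1) * Rpower (INR N) gamma)
  <= tk eta0 gamma N N - tk eta0 gamma N (S i).
Proof. intros He Hg H. rewrite tail_eq by lia.
  set (K := (N - S i)%nat).
  assert (HN : 0 < INR N) by (apply lt_0_INR; lia).
  rewrite sumR_rev.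
  rewrite (sumR_ext _ (fun l => eta0 * / Rpower (INR N) gamma * Rpower (INR (S l)) gamma)).
  2:{ intros l Hl. rewrite step_eq by (unfold K in *; lia).
      replace (N - (S i + (K - 1 - l)))%nat with (S l) by (unfold K in *; lia).
      rewrite Rpower_div; pos. apply lt_0_INR; lia. }
  rewrite sumR_scal.
  pose proof (sum_pow_lower gamma Hg K ltac:(unfold K; lia)).
  pose proof (Rpower_pos (INR N) gamma).
  apply (Rmult_le_reg_l ((gamma + 1) * Rpower (INR N) gamma)). pos.
  replace ((gamma + 1) * Rpower (INR N) gamma * (eta0 * Rpower (INR K) (gamma + 1) /
    ((gamma + 1) * Rpower (INR N) gamma))) with (eta0 * Rpower (INR K) (gamma + 1)) by (field; lra).
  replace ((gamma + 1) * Rpower (INR N) gamma * (eta0 * / Rpower (INR N) gamma *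
    sumR (fun l : nat => Rpower (INR (S l)) gamma) K)) with
    (eta0 * ((gamma + 1) * sumR (fun l : nat => Rpower (INR (S l)) gamma) K)) by (field; lra).
  apply Rmult_le_compat_l; lra. Qed.


Lemma gcomb lam a K0 K1 : 0 < a -> 0 < K0 -> 0 < K1 ->
  (forall s, 0 <= s -> Series (gterm lam s) <= K0) ->
  (forall s, 1 <= s -> Series (gterm lam s) <= K1 * Rpower s (- a)) ->
  forall sig s, 0 < sig -> sig <= s -> Series (gterm lam s) <= (K0 + K1) * Rpower sig (- a).
Proof. intros Ha H0 H1 HK0 HK1 sig s Hsig Hs.
  pose proof (Rpower_pos sig (-a)).
  destruct (Rle_lt_dec 1 s).
  - eapply Rle_trans. apply HK1; auto.
    assert (Rpower s (-a) <= Rpower sig (-a)) by (apply Rpower_le_base_neg; lra). nra.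
  - eapply Rle_trans. apply HK0; lra.
    assert (1 <= Rpower sig (-a)).
    { rewrite <- (Rpower1_l (-a)). apply Rpower_le_base_neg; lra. }
    nra. Qed.

Lemma mul_bound u U g G : 0 <= u -> u <= U -> g <= G -> 0 <= G -> u * g <= U * G.
Proof. intros. destruct (Rle_lt_dec 0 g).
  - apply Rle_trans with (U * g). apply Rmult_le_compat_r; auto.
    apply Rmult_le_compat_l; lra.
  - assert (u * g <= 0) by (apply Rmult_le_0_l; lra).
    assert (0 <= U * G) by (apply Rmult_le_pos; lra). lra. Qed.

Lemma termA0 lam K0 eta0 gamma N i : 0 < eta0 -> 0 <= gamma -> (i < N)%nat -> 0 < K0 ->
  (forall s, 0 <= s -> Series (gterm lam s) <= K0) ->
  (step eta0 gamma N i)^2 * Series (gterm lam (tk eta0 gamma N N - tk eta0 gamma N (S i)))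
  <= eta0^2 * K0.
Proof. intros He Hg Hi HK HK0.
  pose proof (step_le eta0 gamma N i He Hg Hi).
  pose proof (HK0 _ (tail_nonneg eta0 gamma N i He Hg Hi)).
  apply mul_bound; auto; nra. Qed.

Lemma termA lam K0 eta0 gamma N i : 0 < eta0 -> 0 <= gamma -> (i < N)%nat -> 0 < K0 ->
  (forall s, 0 <= s -> Series (gterm lam s) <= K0) ->
  (step eta0 gamma N i)^2 * Series (gterm lam (tk eta0 gamma N N - tk eta0 gamma N (S i)))
  <= K0 * eta0^2 * Rpower (INR (N - i)) (2*gamma) * Rpower (INR N) (-(2*gamma)).
Proof. intros He Hg Hi HK HK0.
  assert (HN : 0 < INR N) by (apply lt_0_INR; lia).
  assert (HM : 0 < INR (N - i)) by (apply lt_0_INR; lia).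
  assert (E : (step eta0 gamma N i)^2 = eta0^2 * Rpower (INR (N - i)) (2*gamma) * Rpower (INR N) (-(2*gamma))).
  { rewrite step_eq by auto. apply ln_inv. pos. pos.
    replace ((eta0 * Rpower (INR (N - i) / INR N) gamma) ^ 2) with
      ((eta0 * Rpower (INR (N - i) / INR N) gamma) * (eta0 * Rpower (INR (N - i) / INR N) gamma)) by ring.
    replace (eta0 ^ 2) with (eta0 * eta0) by ring.
    lnsimp. ring. }
  pose proof (step_le eta0 gamma N i He Hg Hi).
  pose proof (HK0 _ (tail_nonneg eta0 gamma N i He Hg Hi)).
  replace (K0 * eta0 ^ 2 * Rpower (INR (N - i)) (2 * gamma) * Rpower (INR N) (- (2 * gamma)))
    with ((step eta0 gamma N i)^2 * K0) by (rewrite E; ring).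
  apply mul_bound; auto; nra. Qed.

Lemma termB lam K0 K1 a eta0 gamma N i : 0 < eta0 -> 0 <= gamma -> (S i < N)%nat -> 0 < a ->
  0 < K0 -> 0 < K1 ->
  (forall s, 0 <= s -> Series (gterm lam s) <= K0) ->
  (forall s, 1 <= s -> Series (gterm lam s) <= K1 * Rpower s (- a)) ->
  (step eta0 gamma N i)^2 * Series (gterm lam (tk eta0 gamma N N - tk eta0 gamma N (S i)))
  <= ((K0 + K1) * Rpower 2 (2*gamma) * Rpower (gamma + 1) a) *
     (eta0^2 * Rpower (eta0 * INR N) (-a) * Rpower (INR N) (-(2*gamma - a*(gamma+1))))
     * Rpower (INR (N - S i)) (2*gamma - a*(gamma+1)).
Proof. intros He Hg Hi Ha HK0p HK1p HK0 HK1.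
  assert (HN : 0 < INR N) by (apply lt_0_INR; lia).
  set (M := (N - S i)%nat).
  assert (HM1 : 1 <= INR M) by (replace 1 with (INR 1) by reflexivity; apply le_INR; unfold M; lia).
  assert (HNi : INR (N - i) = INR M + 1) by (unfold M; rewrite <- S_INR; f_equal; lia).
  set (sig := eta0 * Rpower (INR M) (gamma + 1) / ((gamma + 1) * Rpower (INR N) gamma)).
  assert (Hsig : 0 < sig) by (unfold sig; pos).
  pose proof (tail_lower eta0 gamma N i He Hg Hi) as Htl. fold M in Htl. fold sig in Htl.
  pose proof (gcomb lam a K0 K1 Ha HK0p HK1p HK0 HK1 sig _ Hsig Htl) as Hg2.
  assert (Hst : (step eta0 gamma N i)^2 <= (eta0 * Rpower (2 * INR M / INR N) gamma)^2).
  { rewrite step_eq by lia. pose proof (Rpower_pos (INR (N - i) / INR N) gamma).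
    assert (Rpower (INR (N - i) / INR N) gamma <= Rpower (2 * INR M / INR N) gamma).
    { apply Rpower_le_base_pos; auto. rewrite HNi; pos. rewrite HNi.
      unfold Rdiv; apply Rmult_le_compat_r. left; pos. lra. }
    apply pow_incr. split. left; pos. apply Rmult_le_compat_l; lra. }
  eapply Rle_trans. apply mul_bound. apply pow2_ge_0. apply Hst. apply Hg2.
  left; pos.
  right. apply ln_inv. pos. pos.
  replace ((eta0 * Rpower (2 * INR M / INR N) gamma) ^ 2) with
      ((eta0 * Rpower (2 * INR M / INR N) gamma) * (eta0 * Rpower (2 * INR M / INR N) gamma)) by ring.
  replace (eta0 ^ 2) with (eta0 * eta0) by ring.
  unfold sig. lnsimp. ring. Qed.

Lemma sumR_splitL f L N : (L <= N)%nat -> sumR f N = sumR f L + sumR (fun j => f (L + j)%nat) (N - L).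
Proof. intros H. replace N with (L + (N - L))%nat at 1 by lia. apply sumR_split. Qed.

Lemma noise_split lam K0 K1 a eta0 gamma N L : 0 < eta0 -> 0 <= gamma -> 0 < a ->
  0 < K0 -> 0 < K1 ->
  (forall s, 0 <= s -> Series (gterm lam s) <= K0) ->
  (forall s, 1 <= s -> Series (gterm lam s) <= K1 * Rpower s (- a)) ->
  (1 <= L)%nat -> (L <= N)%nat ->
  noiseN lam eta0 gamma N <=
    sumR (fun M => K0 * eta0^2 * Rpower (INR (S M)) (2*gamma) * Rpower (INR N) (-(2*gamma))) L
  + sumR (fun j => ((K0 + K1) * Rpower 2 (2*gamma) * Rpower (gamma + 1) a) *
     (eta0^2 * Rpower (eta0 * INR N) (-a) * Rpower (INR N) (-(2*gamma - a*(gamma+1))))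
     * Rpower (INR L + INR j) (2*gamma - a*(gamma+1))) (N - L).
Proof. intros He Hg Ha HK0p HK1p HK0 HK1 HL1 HLN.
  unfold noiseN. rewrite sumR_rev. rewrite (sumR_splitL _ L N HLN).
  apply Rplus_le_compat.
  - apply sumR_le. intros M HM.
    replace (S M) with (N - (N - 1 - M))%nat by lia.
    apply (termA lam K0 eta0 gamma N (N - 1 - M)); auto. lia.
  - apply sumR_le. intros j Hj.
    rewrite <- plus_INR.
    replace (INR (L + j)) with (INR (N - S (N - 1 - (L + j)))) by (f_equal; lia).
    apply (termB lam K0 K1 a eta0 gamma N (N - 1 - (L + j))); auto. lia.
Qed.


Lemma idA e n g : 0 < e -> 0 < n -> 0 <= g ->
  e^2 * Rpower n (-(2*g)) * Rpower (n * Rpower (e * n) (-1/(g+1))) (2*g+1)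
  = e * Rpower (e * n) (-(g/(g+1))).
Proof. intros He Hn Hg. apply ln_inv. pos. pos. replace (e^2) with (e*e) by ring.
  lnsimp. field. lra. Qed.

Lemma idB e n g a : 0 < e -> 0 < n -> 0 <= g ->
  (e^2 * Rpower (e * n) (-a) * Rpower n (-(2*g - a*(g+1)))) *
    Rpower (n * Rpower (e * n) (-1/(g+1)) * /2) (2*g - a*(g+1) + 1)
  = Rpower 2 (-(2*g - a*(g+1) + 1)) * (e * Rpower (e * n) (-(g/(g+1)))).
Proof. intros He Hn Hg. apply ln_inv. pos. pos. replace (e^2) with (e*e) by ring.
  lnsimp. field. lra. Qed.

Lemma idC e n g a : 0 < e -> 0 < n ->
  (e^2 * Rpower (e * n) (-a) * Rpower n (-(2*g - a*(g+1)))) * Rpower n (2*g - a*(g+1) + 1)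
  = e * Rpower (e * n) (1 - a).
Proof. intros He Hn. apply ln_inv. pos. pos. replace (e^2) with (e*e) by ring.
  lnsimp. ring. Qed.


Theorem mainTheorem16 (lam : nat -> R) (c beta gamma etabar : R)
  (Hnn : forall j : nat, (1 <= j)%nat -> 0 <= lam j)
  (Hsum : ex_series (fun n => lam (S n)))
  (Hdec : forall j : nat, (1 <= j)%nat -> lam j <= c * Rpower (INR j) (- beta))
  (Hbeta : 1 < beta) (Hgamma : 0 < gamma) (Hbg : beta <> gamma + 1) :
  exists C : R, 0 < C /\
    forall (N : nat) (eta0 : R),
      0 < eta0 -> eta0 <= etabar ->
      1 <= tk eta0 gamma N N ->
      noiseN lam eta0 gamma N <=
        C * eta0 * Rpower (tk eta0 gamma N N)
                     (- Rmin (1 - 1 / beta) (gamma / (gamma + 1))).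
Proof.
  set (a := 2 - 1/beta).
  assert (Hib : 0 < 1/beta < 1).
  { split. apply Rdiv_lt_0_compat; lra. apply (Rmult_lt_reg_r beta). lra.
    field_simplify; lra. }
  assert (Ha : 1 < a) by (unfold a; lra).
  destruct (gbound0 lam c beta Hbeta Hnn Hsum Hdec) as [K0 [HK0p HK0]].
  destruct (gbound1 lam c beta Hbeta Hnn Hsum Hdec) as [K1 [HK1p HK1]].
  fold a in HK1.
  set (p := 2*gamma - a*(gamma+1)).
  assert (Hp : p <> -1).
  { intros Hp. apply Hbg. unfold p, a in Hp.
    assert (H1 : (gamma + 1) * (1/beta) = 1) by lra.
    apply (Rmult_eq_reg_r (1/beta)). rewrite Rmult_comm, H1. field. lra. lra. }
  assert (HCp : exists Cp, 0 < Cp /\ (-1 < p -> forall n, (1 <= n)%nat ->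
     sumR (fun k => Rpower (INR (S k)) p) n <= Cp * Rpower (INR n) (p+1))).
  { destruct (Rlt_dec (-1) p) as [H|H].
    - destruct (sum_pow_upper p H) as [Cp [H1 H2]]. exists Cp; auto.
    - exists 1. split. lra. intros; lra. }
  destruct HCp as [Cp [HCp HCpb]].
  set (m := Rmin (1 - 1/beta) (gamma/(gamma+1))).
  assert (Hm : 0 < m /\ m <= 1 - 1/beta /\ m <= gamma/(gamma+1)).
  { unfold m. split. apply Rmin_glb_lt. lra. apply Rdiv_lt_0_compat; lra.
    split. apply Rmin_l. apply Rmin_r. }
  set (C2 := (K0 + K1) * Rpower 2 (2*gamma) * Rpower (gamma+1) a).
  assert (HC2 : 0 < C2) by (unfold C2; pos).
  set (CB1 := C2 * (-p/(-p-1)) * Rpower 2 (-(p+1))).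
  set (CB2 := C2 * Cp).
  assert (HCB2 : 0 < CB2) by (unfold CB2; pos).
  set (X0 := exp (ln etabar * (1 + 1/gamma))).
  set (CS := K0 * Rpower X0 (1 + m)).
  assert (HCS : 0 < CS) by (unfold CS; pos).
  exists (K0 + CS + Rabs CB1 + CB2).
  split. { pose proof (Rabs_pos CB1). lra. }
  intros N eta0 He Hebar HT.
  fold m.
  set (T := tk eta0 gamma N N) in *.
  assert (HN : (1 <= N)%nat).
  { destruct N. unfold T, tk in HT; simpl in HT. lra. lia. }
  assert (HNr : 1 <= INR N) by (replace 1 with (INR 1) by reflexivity; apply le_INR; auto).
  set (x := eta0 * INR N).
  assert (HTx : T <= x) by (apply T_le; lra).
  assert (Hx1 : 1 <= x) by lra.
  assert (Hred : forall B, 0 <= B -> noiseN lam eta0 gamma N <= B * eta0 * Rpower x (-m) ->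
     B <= K0 + CS + Rabs CB1 + CB2 ->
     noiseN lam eta0 gamma N <= (K0 + CS + Rabs CB1 + CB2) * eta0 * Rpower T (- m)).
  { intros B HB H1 H2. eapply Rle_trans. apply H1.
    pose proof (Rpower_pos x (-m)).
    assert (Rpower x (-m) <= Rpower T (-m)) by (apply Rpower_le_base_neg; lra).
    apply Rmult_le_compat; try lra. apply Rmult_le_pos; lra.
    apply Rmult_le_compat_r; lra. }
  assert (HxA : Rpower x (-(gamma/(gamma+1))) <= Rpower x (-m)) by (apply Rle_Rpower; lra).
  assert (HxB : Rpower x (1 - a) <= Rpower x (-m)) by (apply Rle_Rpower; unfold a; lra).
  assert (Hx0 : 0 < x) by lra.
  set (ell := INR N * Rpower x (-1/(gamma+1))).
  assert (Hell : 0 < ell) by (unfold ell; pos).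
  destruct (Rlt_le_dec ell 1) as [Hsmall | Hlarge].
  -
    assert (Hbar : 0 < etabar) by lra.
    assert (HxX : x <= X0).
    { apply le_of_ln; auto. unfold X0; pos. unfold X0; rewrite ln_exp. unfold x.
      assert (HN0 : 0 < INR N) by lra.
      rewrite ln_mult by lra.
      assert (Hl : ln ell < 0) by (rewrite <- ln_1; apply ln_increasing; lra).
      unfold ell, x in Hl. lnsimp.
      rewrite ln_mult in Hl by pos. rewrite ln_Rpower in Hl. rewrite ln_mult in Hl by lra.
      assert (He2 : ln eta0 <= ln etabar) by (apply ln_le_mono; lra).
      assert (H3 : (gamma + 1) * (ln (INR N) + -1 / (gamma + 1) * (ln eta0 + ln (INR N))) =
         gamma * ln (INR N) - ln eta0) by (field; lra).
      assert (H4 : (gamma + 1) * (ln (INR N) + -1 / (gamma + 1) * (ln eta0 + ln (INR N))) < 0).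
      { assert (0 < gamma + 1) by lra. nra. }
      apply (Rmult_le_reg_l gamma). lra.
      replace (gamma * (ln etabar * (1 + 1 * / gamma))) with (gamma * ln etabar + ln etabar)
        by (field; lra).
      assert (gamma * ln eta0 <= gamma * ln etabar) by (apply Rmult_le_compat_l; lra).
      lra. }
    apply (Hred CS). lra.
    2:{ pose proof (Rabs_pos CB1). lra. }
    apply Rle_trans with (sumR (fun _ => eta0^2 * K0) N).
    { unfold noiseN. apply sumR_le. intros i Hi. apply termA0; auto; lra. }
    rewrite sumR_const.
    assert (Ex : x = Rpower x (1 + m) * Rpower x (-m)).
    { rewrite <- Rpower_plus. replace (1 + m + - m) with 1 by ring. rewrite Rpower_1; lra. }
    assert (Rpower x (1 + m) <= Rpower X0 (1 + m)) by (apply Rpower_le_base_pos; lra).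
    pose proof (Rpower_pos x (-m)).
    replace (INR N * (eta0 ^ 2 * K0)) with (K0 * eta0 * x) by (unfold x; ring).
    apply Rle_trans with (K0 * eta0 * (Rpower X0 (1 + m) * Rpower x (- m))).
    { rewrite Ex at 1. apply Rmult_le_compat_l. left; pos. apply Rmult_le_compat_r; lra. }
    right; unfold CS; ring.
  - destruct (nfloor_ex ell ltac:(lra)) as [L [HL1 HL2]].
    assert (HL : (1 <= L)%nat) by (destruct L; simpl in HL2; [lra|lia]).
    assert (HLr : 1 <= INR L) by (replace 1 with (INR 1) by reflexivity; apply le_INR; auto).
    assert (Hell2 : ell <= 2 * INR L) by lra.
    assert (HellN : ell <= INR N).
    { unfold ell. assert (Rpower x (-1/(gamma+1)) <= 1).
      { apply Rle_trans with (Rpower x 0). apply Rle_Rpower. lra.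
        unfold Rdiv. assert (0 < / (gamma + 1)) by pos. nra.
        rewrite Rpower_O; lra. }
      pose proof (Rpower_pos x (-1/(gamma+1))). nra. }
    assert (HLN : (L <= N)%nat) by (apply INR_le; lra).
    pose proof (noise_split lam K0 K1 a eta0 gamma N L He (Rlt_le _ _ Hgamma) ltac:(lra)
       HK0p HK1p HK0 HK1 HL HLN) as Hsplit.
    assert (HSA : sumR (fun M => K0 * eta0^2 * Rpower (INR (S M)) (2*gamma) * Rpower (INR N) (-(2*gamma))) L
       <= K0 * (eta0 * Rpower x (-(gamma/(gamma+1))))).
    { apply Rle_trans with (sumR (fun _ => K0 * eta0^2 * Rpower (INR L) (2*gamma) * Rpower (INR N) (-(2*gamma))) L).
      - apply sumR_le. intros M HM. apply Rmult_le_compat_r. left; pos.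
        apply Rmult_le_compat_l. left; pos.
        apply Rpower_le_base_pos. apply lt_0_INR; lia. apply le_INR; lia. lra.
      - rewrite sumR_const.
        assert (E1 : INR L * Rpower (INR L) (2*gamma) = Rpower (INR L) (2*gamma+1)).
        { rewrite Rpower_plus, Rpower_1 by lra. ring. }
        replace (INR L * (K0 * eta0 ^ 2 * Rpower (INR L) (2 * gamma) * Rpower (INR N) (- (2 * gamma))))
          with (K0 * (eta0^2 * Rpower (INR N) (-(2*gamma)) * (INR L * Rpower (INR L) (2*gamma)))) by ring.
        rewrite E1. apply Rmult_le_compat_l. lra.
        unfold x. rewrite <- idA by lra.
        apply Rmult_le_compat_l. left; pos.
        apply Rpower_le_base_pos; try lra. exact HL1. }
    set (Q := eta0^2 * Rpower (eta0 * INR N) (-a) * Rpower (INR N) (-(2*gamma - a*(gamma+1)))) in *.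
    assert (HQ : 0 < Q) by (unfold Q; pos).
    fold p in Hsplit, Q. fold C2 in Hsplit.
    rewrite sumR_scal in Hsplit.
    destruct (Rlt_le_dec p (-1)) as [Hpn | Hpp].
    + pose proof (tail_bound (-p) (INR L) ltac:(lra) HLr (N - L)) as Ht.
      rewrite (sumR_ext _ (fun k => Rpower (INR L + INR k) p)) in Ht
        by (intros; rewrite Ropp_involutive; reflexivity).
      assert (Hpw : Rpower (INR L) (1 - - p) <= Rpower (ell * / 2) (p + 1)).
      { replace (1 - - p) with (p + 1) by ring. apply Rpower_le_base_neg; try lra. }
      assert (HSB : C2 * Q * sumR (fun j => Rpower (INR L + INR j) p) (N - L) <=
                    CB1 * (eta0 * Rpower x (-(gamma/(gamma+1))))).
      { apply Rle_trans with (C2 * Q * (- p / (- p - 1) * Rpower (ell * / 2) (p + 1))).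
        - apply Rmult_le_compat_l. left; pos. eapply Rle_trans. apply Ht.
          apply Rmult_le_compat_l; auto. left; apply Rdiv_lt_0_compat; lra.
        - right. assert (E : Q * Rpower (ell * /2) (p+1) =
             Rpower 2 (-(p+1)) * (eta0 * Rpower x (-(gamma/(gamma+1))))).
          { exact (idB eta0 (INR N) gamma a He ltac:(lra) ltac:(lra)). }
          transitivity (C2 * (-p/(-p-1)) * (Q * Rpower (ell * /2) (p+1))). ring.
          rewrite E. unfold CB1. ring. }
      apply (Hred (K0 + Rabs CB1)). pose proof (Rabs_pos CB1); lra.
      2:{ lra. }
      pose proof (Rle_abs CB1). pose proof (Rpower_pos x (-(gamma/(gamma+1)))).
      eapply Rle_trans. apply Hsplit.
      apply Rle_trans with ((K0 + Rabs CB1) * (eta0 * Rpower x (-(gamma/(gamma+1))))).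
      { assert (CB1 * (eta0 * Rpower x (-(gamma/(gamma+1)))) <=
                Rabs CB1 * (eta0 * Rpower x (-(gamma/(gamma+1))))).
        { apply Rmult_le_compat_r; auto. left; pos. }
        lra. }
      rewrite Rmult_assoc. apply Rmult_le_compat_l. pose proof (Rabs_pos CB1); lra.
      apply Rmult_le_compat_l; lra.
    + assert (Hpp' : -1 < p) by (destruct Hpp; auto; exfalso; apply Hp; auto).
      assert (HS : sumR (fun j => Rpower (INR L + INR j) p) (N - L) <= Cp * Rpower (INR N) (p + 1)).
      { set (g := fun k => Rpower (INR (S k)) p).
        rewrite (sumR_ext _ (fun j => g (L - 1 + j)%nat)).
        2:{ intros j _. unfold g. f_equal. rewrite S_INR, plus_INR, minus_INR by lia.
            simpl. ring. }
        apply Rle_trans with (sumR g N).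
        - apply Rle_trans with (sumR g (L - 1 + (N - L))).
          + rewrite sumR_split. assert (0 <= sumR g (L - 1)).
            { apply sumR_nonneg. intros; unfold g; left; pos. }
            lra.
          + apply sumR_mono_n. lia. intros; unfold g; left; pos.
        - apply HCpb; auto. }
      assert (HSB : C2 * Q * sumR (fun j => Rpower (INR L + INR j) p) (N - L) <=
                    CB2 * (eta0 * Rpower x (1 - a))).
      { apply Rle_trans with (C2 * Q * (Cp * Rpower (INR N) (p + 1))).
        - apply Rmult_le_compat_l. left; pos. auto.
        - right. assert (E : Q * Rpower (INR N) (p+1) = eta0 * Rpower x (1 - a)).
          { exact (idC eta0 (INR N) gamma a He ltac:(lra)). }
          transitivity (C2 * Cp * (Q * Rpower (INR N) (p+1))). ring.
          rewrite E. unfold CB2. ring. }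
      apply (Hred (K0 + CB2)). lra.
      2:{ pose proof (Rabs_pos CB1). lra. }
      eapply Rle_trans. apply Hsplit.
      assert (K0 * (eta0 * Rpower x (- (gamma / (gamma + 1)))) <= K0 * (eta0 * Rpower x (-m))).
      { apply Rmult_le_compat_l. lra. apply Rmult_le_compat_l; lra. }
      assert (CB2 * (eta0 * Rpower x (1 - a)) <= CB2 * (eta0 * Rpower x (-m))).
      { apply Rmult_le_compat_l. lra. apply Rmult_le_compat_l; lra. }
      lra.
Qed.
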